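(* Let ${\cal H}$ be a $1$-Sperner hypergraph and let $C$ be a hyperedge of ${\cal H}$ of maximum possible size. Then for every two distinct vertices $x,y\notin C$ and every two hyperedges $A$ containing $x$ and $B$ containing $y$, $|A|\le|B|$ implies $A\cap C\subseteq B\cap C$.
   Context: A hypergraph ${\cal H}=(V,{\cal E})$ consists of a finite vertex set $V$ and a set ${\cal E}$ of subsets of $V$. It is $1$-Sperner if every two distinct hyperedges $e,f$ satisfy $\min\{|e\setminus f|,|f\setminus e|\}=1$. *)

(* Defs.v *)
From mathcomp Require Import all_boot.
Set Implicit Arguments. Unset Strict Implicit. Unset Printing Implicit Defensive.

Definition one_Sperner (V : finType) (E : {set {set V}}) : Prop :=
  forall e f, e \in E -> f \in E -> e != f ->
    minn #|e :\: f| #|f :\: e| = 1.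

(* Main.v *)
Require Import Defs.
From mathcomp Require Import all_boot.
From mathcomp Require Import zify.

Lemma out1 (V : finType) (E : {set {set V}}) (C e : {set V}) :
  one_Sperner E -> C \in E -> (forall e, e \in E -> #|e| <= #|C|) ->
  e \in E -> e != C -> #|e :\: C| = 1.
Proof.
move=> HS HC Hmax He Hne.
have := HS _ _ He HC Hne.
have h1 := cardsID C e. have h2 := cardsID e C.
have h3 := Hmax _ He. rewrite setIC in h2. lia.
Qed.

Theorem lemma5 (V : finType) (E : {set {set V}}) (C : {set V}) :
  one_Sperner E ->
  C \in E ->
  (forall e, e \in E -> #|e| <= #|C|) ->
  forall (x y : V) (A B : {set V}),
    x != y -> x \notin C -> y \notin C ->
    A \in E -> x \in A -> B \in E -> y \in B ->
    #|A| <= #|B| ->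
    A :&: C \subset B :&: C.
Proof.
move=> HS HC Hmax x y A B xy xC yC HA xA HB yB AB.
apply/subsetP => z /setIP [zA zC].
rewrite inE zC andbT.
apply/negPn/negP => zB.
have BneC : B != C by apply/eqP => BC; rewrite -BC yB in yC.
have hB := @out1 _ E C B HS HC Hmax HB BneC.
have xB : x \notin B.
  apply/negP => xB.
  have : [set x; y] \subset B :\: C.
    by apply/subsetP => w; rewrite !inE => /orP [] /eqP ->; rewrite ?xC ?yC ?xB ?yB.
  move/subset_leq_card; rewrite cards2 xy hB //.
have AneB : A != B by apply/eqP => e; rewrite -e xA in xB.
have h2 : 2 <= #|A :\: B|.
  have : [set x; z] \subset A :\: B.
    by apply/subsetP => w; rewrite !inE => /orP [] /eqP ->; rewrite ?xB ?zB ?xA ?zA.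
  move/subset_leq_card; rewrite cards2.
  have -> : x != z by apply/eqP => e; rewrite e zC in xC.
  done.
have := HS _ _ HA HB AneB.
have h3 := cardsID B A. have h4 := cardsID A B. rewrite setIC in h4. move=> Hm; clear -Hm h2 h3 h4 AB; lia.
Qed.
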